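(* Let $L\in\mathcal{G}(\Sigma_0,T_0)$ be a deterministic guarded language and let $(\mathfrak{s},\mathfrak{t})$ be a guarded language morphism with $\mathfrak{s}:\Sigma_0\to\mathcal{G}(\Sigma_1,T_1)$ and $\mathfrak{t}:T_0\to\mathsf{BA}(T_1)$. If $\mathfrak{s}(p)$ is deterministic for every $p\in\Sigma_0$, then $\mathrm{apply}^{\mathfrak{s}}_{\mathfrak{t}}(L)$ is deterministic.
   Context: For finite $T$, $\Sigma$: $\mathsf{BA}(T)$ are Boolean expressions over $T$; atoms $\mathsf{At}_T=2^T$; $\alpha\le b$ means $b$ holds under the assignment making exactly the tests in $\alpha$ true. Guarded strings: words in $\mathsf{At}_T(\Sigma\mathsf{At}_T)^*$; $\mathcal{G}(\Sigma,T)$ is the set of guarded languages regular over the alphabet $\mathsf{At}_T\cup\Sigma$. A guarded language is deterministic if for all distinct $w,w'$ in it, $w$ is not a proper prefix of $w'$ and the first position where $w,w'$ differ is an atom. $w'\alpha\diamond\alpha x'=w'\alpha x'$. A guarded language morphism is a pair $(\mathfrak{s},\mathfrak{t})$ with $\mathfrak{s}:\Sigma_0\to\mathcal{G}(\Sigma_1,T_1)$ and $\mathfrak{t}:T_0\to\mathsf{BA}(T_1)$. $\beta\in\mathsf{At}_{T_1}$ is $\mathfrak{t}$-consistent with $\alpha\in\mathsf{At}_{T_0}$ if for all $t\in T_0$, $\alpha\le t$ iff $\beta\le\mathfrak{t}(t)$. $\mathrm{apply}_{\mathfrak{t}}(L)$ = set of $\beta_0p_0\beta_1\cdots p_{n-1}\beta_n$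 such that some $\alpha_0p_0\cdots p_{n-1}\alpha_n\in L$ has each $\beta_i$ $\mathfrak{t}$-consistent with $\alpha_i$. For $L$ over $(\Sigma_0,T_1)$, $\mathrm{apply}^{\mathfrak{s}}(L)$ = set of $\alpha_0\diamond w_0\diamond\alpha_1\diamond\cdots\diamond w_{n-1}\diamond\alpha_n$ with $\alpha_0p_0\cdots p_{n-1}\alpha_n\in L$, $w_i\in\mathfrak{s}(p_i)$. $\mathrm{apply}^{\mathfrak{s}}_{\mathfrak{t}}=\mathrm{apply}^{\mathfrak{s}}\circ\mathrm{apply}_{\mathfrak{t}}$. *)

(* Defs.v *)
From mathcomp Require Import all_boot.
Set Implicit Arguments. Unset Strict Implicit. Unset Printing Implicit Defensive.

Inductive bexp (T : Type) : Type :=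
| BFalse | BTrue | BTest of T
| BAnd of bexp T & bexp T | BOr of bexp T & bexp T | BNot of bexp T.
Arguments BFalse {T}. Arguments BTrue {T}.

(* alpha <= b : b holds when exactly the tests in alpha are true.
   Atoms At_T = 2^T are represented as {set T}. *)
Fixpoint atom_le (T : finType) (alpha : {set T}) (b : bexp T) : bool :=
  match b with
  | BFalse => false
  | BTrue => true
  | BTest t => t \in alpha
  | BAnd b1 b2 => atom_le alpha b1 && atom_le alpha b2
  | BOr b1 b2 => atom_le alpha b1 || atom_le alpha b2
  | BNot b1 => ~~ atom_le alpha b1
  end.

Definition letter (T S : finType) : finType := ({set T} + S)%type.
Definition is_atom (T S : finType) (x : letter T S) : bool :=
  if x is inl _ then true else false.

Definition lang (T S : finType) := seq (letter T S) -> Prop.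

Fixpoint guarded (T S : finType) (w : seq (letter T S)) : bool :=
  match w with
  | inl _ :: rest =>
      match rest with
      | [::] => true
      | inr _ :: rest' => guarded rest'
      | _ => false
      end
  | _ => false
  end.

Definition regular (A : finType) (L : seq A -> Prop) : Prop :=
  exists (Q : finType) (q0 : Q) (d : Q -> A -> Q) (F : pred Q),
    forall w, L w <-> F (foldl d q0 w).

Definition in_G (T S : finType) (L : lang T S) : Prop :=
  (forall w, L w -> guarded w) /\ regular L.

Definition proper_prefix (A : eqType) (u v : seq A) : bool :=
  prefix u v && (u != v).

Definition deterministic (T S : finType) (L : lang T S) : Prop :=
  forall w w', L w -> L w' -> w <> w' ->
    ~~ proper_prefix w w' /\
    (forall i x0, i < size w -> i < size w' -> take i w = take i w' ->
       nth x0 w i <> nth x0 w' i -> is_atom (nth x0 w i)).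

Definition consistent (T0 T1 : finType) (t : T0 -> bexp T1)
  (beta : {set T1}) (alpha : {set T0}) : Prop :=
  forall x : T0, (x \in alpha) = atom_le beta (t x).

Fixpoint rel_word (T0 T1 S : finType) (t : T0 -> bexp T1)
  (y : seq (letter T1 S)) (x : seq (letter T0 S)) : Prop :=
  match y, x with
  | [::], [::] => True
  | inl b :: y', inl a :: x' => consistent t b a /\ rel_word t y' x'
  | inr p :: y', inr q :: x' => p = q /\ rel_word t y' x'
  | _, _ => False
  end.

Definition apply_t (T0 T1 S : finType) (t : T0 -> bexp T1) (L : lang T0 S)
  : lang T1 S :=
  fun y => exists x, L x /\ rel_word t y x.

(* partial coalesced concatenation: w'α ⋄ αx' = w'αx' *)
Definition diamond (A : eqType) (u v : seq A) (isat : A -> bool) : option (seq A) :=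
  match rev u, v with
  | a :: _, b :: v' => if (a == b) && isat a then Some (u ++ v') else None
  | _, _ => None
  end.

(* apply^s : the words α0 ⋄ w0 ⋄ α1 ⋄ ... ⋄ w_{n-1} ⋄ α_n *)
Inductive expand (T S0 S1 : finType) (s : S0 -> lang T S1)
  : seq (letter T S0) -> seq (letter T S1) -> Prop :=
| expand_last (a : {set T}) : expand s [:: inl a] [:: inl a]
| expand_step (a : {set T}) (p : S0) (rest : seq (letter T S0))
    (w y' z y : seq (letter T S1)) :
    s p w -> expand s rest y' ->
    diamond [:: inl a] w (@is_atom T S1) = Some z ->
    diamond z y' (@is_atom T S1) = Some y ->
    expand s (inl a :: inr p :: rest) y.

Definition apply_s (T S0 S1 : finType) (s : S0 -> lang T S1) (L : lang T S0)
  : lang T S1 :=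
  fun y => exists x, L x /\ expand s x y.

Definition apply_st (T0 T1 S0 S1 : finType) (s : S0 -> lang T1 S1)
  (t : T0 -> bexp T1) (L : lang T0 S0) : lang T1 S1 :=
  apply_s s (apply_t t L).

(* Main.v *)
Require Import Defs.
From mathcomp Require Import all_boot.
Set Implicit Arguments. Unset Strict Implicit.

Section Ag.
Variables (A : eqType) (isat : pred A).

Inductive ag : seq A -> seq A -> Prop :=
| ag_eq w : ag w w
| ag_div a b r r' : a <> b -> isat a -> isat b -> ag (a :: r) (b :: r')
| ag_cons c r r' : ag r r' -> ag (c :: r) (c :: r').

Lemma ag_nil r : ag [::] r -> r = [::].
Proof. by move=> H; inversion H. Qed.

Lemma ag_tail c v v' : ag (c :: v) (c :: v') -> ag v v'.
Proof. move=> H; inversion H; subst => //; constructor. Qed.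

Lemma ag_catl u v v' : ag v v' -> ag (u ++ v) (u ++ v').
Proof. by elim: u => //= c u IH H; apply: ag_cons; apply: IH. Qed.

Lemma ag_catD w w' r r' : ag w w' -> w <> w' -> ag (w ++ r) (w' ++ r').
Proof.
elim=> [u /(_ erefl) //|a b r0 r0' ab ha hb _|c r0 r0' H IH ne].
  by apply: ag_div.
by apply: ag_cons; apply: IH => E; apply: ne; rewrite E.
Qed.

Lemma ag_block z0 c z0' c' v v' :
  ag (rcons z0 c) (rcons z0' c') -> ag (c :: v) (c' :: v') ->
  ag (rcons z0 c ++ v) (rcons z0' c' ++ v').
Proof.
move=> H1 H2.
case: (eqVneq (rcons z0 c) (rcons z0' c')) => [E|ne].
  move: (E) => /eqP; rewrite eqseq_rcons => /andP[/eqP e1 /eqP e2]; subst.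
  by apply: ag_catl; apply: ag_tail H2.
by apply: ag_catD => // E; rewrite E eqxx in ne.
Qed.

Lemma ag_of w w' :
  (w = w' \/ (~~ prefix w w' /\ ~~ prefix w' w)) ->
  (forall i x0, i < size w -> i < size w' -> take i w = take i w' ->
     nth x0 w i <> nth x0 w' i -> isat (nth x0 w i) && isat (nth x0 w' i)) ->
  ag w w'.
Proof.
elim: w w' => [|a r IH] [|b r'] //=.
- move=> _ _; constructor.
- by case=> [//|[]].
- by case=> [//|[_]].
move=> Hp Ha.
case: (eqVneq a b) => [E|ab]; first subst b.
  apply: ag_cons; apply: IH.
    case: Hp => [[->]|]; first by left.
    by rewrite eqxx /= => -[h1 h2]; right.
  move=> i x0 h1 h2 ht hn.
  have := Ha i.+1 x0 h1 h2; rewrite /= ht => /(_ erefl hn) //.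
have := Ha 0 a erefl erefl erefl.
rewrite /= => /(_ (elimN eqP ab)) /andP[h1 h2].
by apply: ag_div => //; apply/eqP.
Qed.

Lemma ag_det w w' : ag w w' -> w <> w' ->
  ~~ prefix w w' /\
  (forall i x0, i < size w -> i < size w' -> take i w = take i w' ->
     nth x0 w i <> nth x0 w' i -> isat (nth x0 w i)).
Proof.
elim=> [u /(_ erefl) //|a b r r' ab ha hb _|c r r' H IH ne].
  split; first by rewrite prefix_cons; apply/nandP; left; apply/eqP.
  by case=> [//|i] x0 _ _ /= [e]; case: ab.
have ne' : r <> r' by move=> E; apply: ne; rewrite E.
case: (IH ne') => h1 h2; split; first by rewrite prefix_cons eqxx.
case=> [|i] x0 //= s1 s2 [ht] hn.
exact: h2.
Qed.
End Ag.

Lemma ag_consinv (A : eqType) (isat : pred A) c r x' : ag isat (c :: r) x' ->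
  x' = c :: r \/ (exists d r', x' = d :: r' /\ c <> d /\ isat c /\ isat d) \/
  (exists r', x' = c :: r' /\ ag isat r r').
Proof.
move=> H; inversion H; subst.
- by left.
- by right; left; exists b, r'.
- by right; right; eexists; split; [reflexivity|eassumption].
Qed.

Definition agL (T S : finType) (L : lang T S) :=
  forall w w', L w -> L w' -> ag (@is_atom T S) w w'.

Lemma det_agL (T S : finType) (L : lang T S) : deterministic L -> agL L.
Proof.
move=> D w w' Lw Lw'.
case: (eqVneq w w') => [->|ne]; first by constructor.
have ne' : w <> w' by apply/eqP.
have ne'' : w' <> w by move=> E; apply: ne'.
case: (D w w' Lw Lw' ne') => h1 h3; case: (D w' w Lw' Lw ne'') => h2 h4.
apply: ag_of.
  right; rewrite /proper_prefix in h1 h2.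
  by rewrite ne eq_sym ne !andbT in h1 h2; split.
move=> i x0 s1 s2 ht hn.
rewrite (h3 i x0 s1 s2 ht hn) /=.
by apply: (h4 i x0 s2 s1 (esym ht)) => E; apply: hn.
Qed.

Lemma agL_det (T S : finType) (L : lang T S) : agL L -> deterministic L.
Proof.
move=> H w w' Lw Lw' ne; have [h1 h2] := ag_det (H _ _ Lw Lw') ne.
by split => //; rewrite /proper_prefix (negPf h1).
Qed.

Section Rel.
Variables (T0 T1 S : finType) (t : T0 -> bexp T1).

Lemma consistent_inj b1 b2 a1 a2 : consistent t b1 a1 -> consistent t b2 a2 ->
  a1 <> a2 -> b1 <> b2.
Proof.
move=> c1 c2 ne E; subst; apply: ne; apply/setP => x; by rewrite c1 c2.
Qed.

Lemma rel_eq (x : seq (letter T0 S)) y y' : rel_word t y x -> rel_word t y' x ->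
  ag (@is_atom T1 S) y y'.
Proof.
elim: x y y' => [|c x IH] [|d y] [|d' y'] //=; try by constructor.
all: try by case: d'.
all: try by case: d.
case: c => [a|q]; case: d => [b|p] //; case: d' => [b'|p'] //.
  move=> [_ r1] [_ r2].
  case: (eqVneq b b') => [E|ne]; first by subst; apply: ag_cons; apply: IH r1 r2.
  by apply: ag_div => // -[E]; rewrite E eqxx in ne.
move=> [-> r1] [-> r2]; apply: ag_cons; apply: IH r1 r2.
Qed.

Lemma rel_ag (x x' : seq (letter T0 S)) y y' : ag (@is_atom T0 S) x x' ->
  rel_word t y x -> rel_word t y' x' -> ag (@is_atom T1 S) y y'.
Proof.
move=> H; elim: H y y' => [u|a b r r' ab ha hb|c r r' H IH] y y'.
- exact: rel_eq.
- case: a ab ha => [a|//] ab _; case: b ab hb => [b|//] ab _.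
  case: y => [|[b1|//] y] //=; case: y' => [|[b2|//] y'] //= [c1 _] [c2 _].
  apply: ag_div => // -[E]; apply: (consistent_inj c1 c2 _ E) => E'.
  by apply: ab; rewrite E'.
- case: y => [|d y] //; case: y' => [|d' y'] //.
  case: c => [a|q]; case: d => [b|p] //; case: d' => [b'|p'] //=.
    move=> [_ r1] [_ r2].
    case: (eqVneq b b') => [E|ne]; first by subst; apply: ag_cons; apply: IH r1 r2.
    by apply: ag_div => // -[E]; rewrite E eqxx in ne.
  move=> [-> r1] [-> r2]; apply: ag_cons; apply: IH r1 r2.
Qed.
End Rel.

Lemma diamond_inv (A : eqType) (u v z : seq A) isat : diamond u v isat = Some z ->
  exists u0 c v', u = rcons u0 c /\ v = c :: v' /\ z = u ++ v'.
Proof.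
rewrite /diamond; case E: (rev u) => [|a ra] //; case: v => [|b v'] //.
case: ifP => // /andP[/eqP <- _] [<-].
exists (rev ra), a, v'; split => //.
by rewrite -rev_cons -E revK.
Qed.

Lemma diamond1 (A : eqType) (x : A) w z isat : diamond [:: x] w isat = Some z -> z = w.
Proof.
move=> /diamond_inv [u0 [c [v' [e1 [-> ->]]]]].
by case: u0 e1 => [|? []] //= [->].
Qed.

Section Exp.
Variables (T S0 S1 : finType) (s : S0 -> lang T S1).
Hypothesis Hs : forall p, agL (s p).

Lemma expand_head x y : expand s x y ->
  exists a x1 y1, x = inl a :: x1 /\ y = inl a :: y1.
Proof.
case=> [a|a p rest w y' z y0 _ _ d1 d2]; first by exists a, [::], [::].
move/diamond_inv: d1 => [u0 [c [v' [_ [_ Ez]]]]].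
move/diamond_inv: d2 => [u1 [c1 [v1 [_ [_ ->]]]]]; rewrite Ez.
by exists a, (inr p :: rest), (v' ++ v1).
Qed.

Lemma expand_single a y : expand s [:: inl a] y -> y = [:: inl a].
Proof. by move=> H; inversion H. Qed.

Lemma exp_ag : forall x y, expand s x y -> forall x' y', ag (@is_atom T S0) x x' -> expand s x' y' ->
  ag (@is_atom T S1) y y'.
Proof.
move=> x0 y0'; elim=> [a|a p rest w y0 z y Hw Hrest IH d1 d2] x' y' Hag Hy'.
  case/ag_consinv: Hag => [E|[[d [r' [E [ne [_ hd]]]]]|[r' [E /ag_nil Er]]]].
  - by subst; rewrite (expand_single Hy'); constructor.
  - have [b [x1 [y1 [Ex Ey]]]] := expand_head Hy'; subst.
    case: Ex => Ed _; subst.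
    by apply: ag_div => // -[Eb]; apply: ne; rewrite Eb.
  - by subst; rewrite (expand_single Hy'); constructor.
have Hyy : expand s (inl a :: inr p :: rest) y by apply: expand_step Hw Hrest d1 d2.
have [[rest' [Ex' Hr]]|Hdone] : (exists rest', x' = inl a :: inr p :: rest' /\ ag (@is_atom T S0) rest rest') \/ ag (@is_atom T S1) y y'; last exact: Hdone.
  case/ag_consinv: Hag => [E|[[d [r' [E [ne [_ hd]]]]]|[r' [E H2]]]].
  - by left; exists rest; split => //; constructor.
  - right.
    have [b [x1 [y1 [Ex Ey]]]] := expand_head Hy'; subst.
    have [b' [x2 [y2 [Ex2 Ey2]]]] := expand_head Hyy; subst.
    case: Ex => Ed _; case: Ex2 => Eb' _; subst.
    apply: ag_div => // -[Eb]; apply: ne; by rewrite Eb.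
  - left; case/ag_consinv: H2 => [E2|[[d [r2 [_ [_ [//]]]]]|[r2 [E2 H3]]]].
    + by exists rest; subst; split => //; constructor.
    + by exists r2; subst.
subst x'.
inversion Hy'; subst.
have Ez := diamond1 d1; subst z.
match goal with H : diamond [:: inl a] ?w' _ = Some ?z' |- _ => have Ez' := diamond1 H; subst z' end.
move/diamond_inv: d2 => [z0 [c [v [Ew [Ey0 ->]]]]].
match goal with H : diamond ?w' ?y0' _ = Some y' |- _ =>
  move/diamond_inv: H => [z0' [c' [v' [Ew' [Ey0' ->]]]]] end.
rewrite Ew Ew'.
apply: ag_block.
  rewrite -Ew -Ew'; exact: (@Hs p w _ Hw ltac:(eassumption)).
rewrite -Ey0 -Ey0'; apply: IH Hr _; eassumption.
Qed.
End Exp.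

Theorem proposition5p4 (S0 S1 T0 T1 : finType) (L : lang T0 S0)
  (s : S0 -> lang T1 S1) (t : T0 -> bexp T1) :
  in_G L -> (forall p, in_G (s p)) ->
  deterministic L -> (forall p, deterministic (s p)) ->
  deterministic (apply_st s t L).
Proof.
move=> _ _ DL Ds.
have HL := det_agL DL.
have Hs : forall p, agL (s p) by move=> p; apply: det_agL.
have Ht : agL (apply_t t L).
  move=> x x' [u [Lu Ru]] [u' [Lu' Ru']].
  exact: rel_ag (@HL _ _ Lu Lu') Ru Ru'.
apply: agL_det => y y' [x [Lx Ex]] [x' [Lx' Ex']].
exact (exp_ag Hs Ex (@Ht _ _ Lx Lx') Ex').
Qed.
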